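(* Let $M$ be a matroid on ground set $E$ that is $k$-nearly finitary for some integer $k$. Let $S(M)=\{F^*\cup B: F^*\text{ is a base of }(M^{\mathrm{fin}})^*,\ B\text{ is a base of }M,\ F^*\cap B=\emptyset\}$ and let $S(M)_{\min}$ be the set of inclusion-minimal elements of $S(M)$. Then $S(M)_{\min}$ is non-empty.
   Context: Matroids (possibly infinite): $\emptyset$ independent; subsets of independent sets independent; if $B$ is maximal independent and $A$ non-maximal independent, then $A\cup\{b\}$ is independent for some $b\in B\setminus A$; for independent $A\subseteq X\subseteq E$ there is a maximal independent $S$ with $A\subseteq S\subseteq X$. Bases are maximal independent sets. The dual $N^*$ has as bases the complements $E\setminus B$ of bases $B$ of $N$. The finitarization $M^{\mathrm{fin}}$ has as independent sets those sets all of whose finite subsets are independent in $M$. $M$ is $k$-nearly finitary if $|F\setminus B|\le k$ whenever a base $F$ of $M^{\mathrm{fin}}$ contains a base $B$ of $M$. *)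

(* Defs.v *)
From Stdlib Require Import List.

Section MatroidDefs.
Variable E : Type.

Definition subset (A B : E -> Prop) : Prop := forall x, A x -> B x.
Definition setU (A B : E -> Prop) : E -> Prop := fun x => A x \/ B x.
Definition set1 (b : E) : E -> Prop := fun x => x = b.
Definition disjoint (A B : E -> Prop) : Prop := forall x, A x -> B x -> False.
Definition set_eq (A B : E -> Prop) : Prop := forall x, A x <-> B x.

Definition finite_set (A : E -> Prop) : Prop :=
  exists l : list E, forall x, A x -> In x l.

Definition card_le (A : E -> Prop) (k : nat) : Prop :=
  exists l : list E, length l <= k /\ forall x, A x -> In x l.

Definition indep_system := (E -> Prop) -> Prop.

Definition base (I : indep_system) (B : E -> Prop) : Prop :=
  I B /\ forall B', I B' -> subset B B' -> subset B' B.

Definition max_indep_in (I : indep_system) (X S : E -> Prop) : Prop :=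
  I S /\ subset S X /\ forall S', I S' -> subset S S' -> subset S' X -> subset S' S.

(* Matroid axioms (possibly infinite), ground set = the whole type E *)
Definition is_matroid (I : indep_system) : Prop :=
  I (fun _ => False) /\
  (forall A B, I B -> subset A B -> I A) /\
  (forall A B, I A -> ~ base I A -> base I B ->
     exists b, B b /\ ~ A b /\ I (setU A (set1 b))) /\
  (forall A X, I A -> subset A X ->
     exists S, subset A S /\ max_indep_in I X S).

(* dual: its bases are the complements of the bases of N *)
Definition dual (I : indep_system) : indep_system :=
  fun A => exists B, base I B /\ disjoint A B.

Definition finitarization (I : indep_system) : indep_system :=
  fun A => forall F, finite_set F -> subset F A -> I F.

Definition nearly_finitary (k : nat) (I : indep_system) : Prop :=
  forall F B, base (finitarization I) F -> base I B -> subset B F ->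
    card_le (fun x => F x /\ ~ B x) k.

Definition SM (I : indep_system) (X : E -> Prop) : Prop :=
  exists Fs B, base (dual (finitarization I)) Fs /\ base I B /\
    disjoint Fs B /\ set_eq X (setU Fs B).

Definition SM_min (I : indep_system) (X : E -> Prop) : Prop :=
  SM I X /\ forall Y, SM I Y -> subset Y X -> subset X Y.

End MatroidDefs.

(* Main.v *)
Require Import Defs.
From mathcomp Require Import all_boot boolp classical_sets.
Lemma zorn_sets (T:Type) (P : (T->Prop)->Prop) :
  (forall F : (T->Prop)->Prop, (forall X, F X -> P X) ->
     (forall X Y, F X -> F Y -> (forall t, X t -> Y t) \/ (forall t, Y t -> X t)) ->
     P (fun x => exists X, F X /\ X x)) ->
  exists A, P A /\ forall B, (forall t, A t -> B t) -> ~ (forall t, B t -> A t) -> ~ P B.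
Proof.
Local Open Scope classical_set_scope.
move=> H.
have H' : forall F : set (set T), F `<=` P -> total_on F subset -> P (\bigcup_(X in F) X).
  move=> F FP Ft.
  have := H F FP Ft.
  congr P.
  apply: funext => x; apply: propext; split.
    by case=> X [FX Xx]; exists X.
  by case=> X FX Xx; exists X.
have [A [PA HA]] := Zorn_bigcup H'.
exists A; split => // B AB nBA; apply: HA; split => //.
Qed.

Require Import Defs.
From Stdlib Require Import List Classical Lia.

Section Main.
Variable E : Type.
Variable I : indep_system E.

Definition finI := finitarization E I.

Lemma chain_finite (B : E -> Prop) (C : (E -> Prop) -> Prop) :
  (forall X Y, C X -> C Y -> (forall t, X t -> Y t) \/ (forall t, Y t -> X t)) ->
  forall l : list E, exists Y, (C Y \/ forall x, ~ Y x) /\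
    forall x, In x l -> (B x \/ exists X, C X /\ X x) -> B x \/ Y x.
Proof.
intros Ht l; induction l as [|a l IH].
- exists (fun _ => False); split; [right; auto|]. intros x Hx; destruct Hx.
- destruct IH as [Y [HY HYl]].
  destruct (classic (exists X, C X /\ X a)) as [[X [CX Xa]]|Hn].
  + destruct HY as [CY|EY].
    * destruct (Ht X Y CX CY) as [XY|YX].
      -- exists Y; split; [left; auto|]. intros x [<-|Hx] Hb.
         ++ right; auto.
         ++ auto.
      -- exists X; split; [left; auto|]. intros x [<-|Hx] Hb.
         ++ right; auto.
         ++ destruct (HYl x Hx Hb); auto.
    * exists X; split; [left; auto|]. intros x [<-|Hx] Hb.
      ++ right; auto.
      ++ destruct (HYl x Hx Hb) as [|H]; auto. destruct (EY x H).
  + exists Y; split; auto. intros x [<-|Hx] Hb.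
    * destruct Hb as [|Hb]; auto. destruct (Hn Hb).
    * auto.
Qed.

Lemma fin_base_ext (B : E -> Prop) : finI B ->
  exists F, base E finI F /\ subset E B F.
Proof.
intro HB.
destruct (zorn_sets E (fun A => finI (setU E B A))) as [A [PA HA]].
- intros C CP Ct. intros F [l Hl] HF.
  destruct (chain_finite B C Ct l) as [Y [HY HYl]].
  assert (HPY : finI (setU E B Y)).
  { destruct HY as [CY|EY]; [apply CP; auto|].
    intros G HG HG'. apply HB; auto. intros x Gx. destruct (HG' x Gx); auto. destruct (EY x H). }
  apply HPY; [exists l; auto|]. intros x Fx. apply (HYl x (Hl x Fx)). apply (HF x Fx).
- exists (setU E B A). split.
  + split; auto. intros F' HF' Hs x F'x.
    apply NNPP; intro Hn.
    apply (HA F').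
    * intros t At. apply Hs. right; auto.
    * intro H. apply Hn. right; apply H; auto.
    * intros G HG HG'. apply HF'; auto. intros y Gy. destruct (HG' y Gy) as [By|Fy]; auto.
      apply Hs; left; auto.
  + intros x Bx; left; auto.
Qed.

Definition Ach (n : nat) : Prop :=
  exists F B l, base E finI F /\ base E I B /\ subset E B F /\ NoDup l /\
    length l = n /\ forall x, In x l -> F x /\ ~ B x.

Lemma max_nat (P : nat -> Prop) (k : nat) : P 0 -> (forall n, P n -> le n k) ->
  exists n, P n /\ forall m, P m -> le m n.
Proof.
intros P0 Hb. apply NNPP; intro Hn.
assert (Hs : forall n, P n -> exists m, P m /\ lt n m).
{ intros n Pn. apply NNPP; intro H2. apply Hn. exists n; split; auto.
  intros m Pm. apply NNPP; intro H3. apply H2. exists m; split; auto; lia. }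
assert (Hi : forall i, exists n, P n /\ le i n).
{ induction i as [|i [n [Pn Hin]]].
  - exists 0; split; auto; lia.
  - destruct (Hs n Pn) as [m [Pm Hm]]. exists m; split; auto; lia. }
destruct (Hi (S k)) as [n [Pn Hn']]. specialize (Hb n Pn). lia.
Qed.

Theorem main_thm (k : nat) :
  is_matroid E I -> nearly_finitary E k I ->
  exists X : E -> Prop, SM_min E I X.
Proof.
intros [H0 [Hdown [Haug Hext]]] Hnf.
destruct (Hext (fun _ => False) (fun _ => True) H0) as [B0 [_ [IB0 [_ HB0]]]].
{ intros x []. }
assert (bB0 : base E I B0).
{ split; auto. intros B' IB' Hs. apply HB0; auto. intros ? ?; exact Logic.I. }
assert (fB0 : finI B0).
{ intros F _ HF. apply (Hdown F B0); auto. }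
destruct (fin_base_ext B0 fB0) as [F0 [bF0 HF0]].
assert (Hbound : forall n, Ach n -> le n k).
{ intros n [F [B [l [bF [bB [BF [nd [len Hl]]]]]]]].
  destruct (Hnf F B bF bB BF) as [l' [len' Hl']].
  assert (Hle : le (length l) (length l')).
  { apply NoDup_incl_length; auto. intros x Hx. apply Hl'. apply Hl; auto. }
  lia. }
assert (A0 : Ach 0).
{ exists F0, B0, nil. split; [auto|split; [auto|split; [auto|split; [constructor|split; [reflexivity|]]]]].
  intros x []. }
destruct (max_nat Ach k A0 Hbound) as [n [An Hmax]].
destruct An as [F [B [l [bF [bB [BF [nd [len Hl]]]]]]]].
assert (Hdual : forall F1, base E finI F1 -> base E (dual E finI) (fun x => ~ F1 x)).
{ intros F1 bF1. split.
  - exists F1; split; auto. intros x H1 H2; auto.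
  - intros Fs' [F' [bF' dF']] Hs x Fs'x F1x.
    assert (F'F1 : subset E F' F1).
    { intros y F'y. apply NNPP; intro Hn. apply (dF' y); auto. }
    apply (dF' x Fs'x). destruct bF' as [_ mF']. apply (mF' F1); auto. apply bF1. }
assert (Hchar : forall Y, SM E I Y -> exists FY BY, base E finI FY /\ base E I BY /\
           subset E BY FY /\ forall x, ~ Y x -> FY x /\ ~ BY x).
{ intros Y [Fs [BY [bFs [bBY [dj HY]]]]].
  destruct bFs as [[FY [bFY dFY]] mFs].
  assert (Hc : forall x, ~ FY x -> Fs x).
  { intros x Hx. apply (mFs (fun x => ~ FY x)).
    - exists FY; split; auto. intros y H1 H2; auto.
    - intros y Fy HFY. apply (dFY y); auto.
    - auto. }
  exists FY, BY. split; [auto|split; [auto|split]].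
  - intros x BYx. apply NNPP; intro Hn. apply (dj x); auto.
  - intros x H. split.
    + apply NNPP; intro Hn. apply H. apply HY. left; auto.
    + intro Hb. apply H. apply HY. right; auto. }
exists (setU E (fun x => ~ F x) B). split.
- exists (fun x => ~ F x), B. split; [apply Hdual; auto|split; [auto|split]].
  + intros x H1 H2; auto.
  + intros x; split; auto.
- intros Y SY HYX x Xx. apply NNPP; intro nYx.
  destruct (Hchar Y SY) as [FY [BY [bFY [bBY [BYFY HYc]]]]].
  assert (Ax : Ach (S n)).
  { exists FY, BY, (x :: l). split; [auto|split; [auto|split; [auto|split; [|split]]]].
    - constructor; auto. intro Hin. destruct (Hl x Hin) as [Fx nBx].
      destruct Xx as [H|H]; auto.
    - simpl; lia.
    - intros y [<-|Hy]; [apply HYc; auto|]. apply HYc. intro Yy.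
      destruct (HYX y Yy) as [H|H]; destruct (Hl y Hy); auto. }
  specialize (Hmax _ Ax). lia.
Qed.
End Main.

Theorem theorem3p4p4 (E : Type) (I : indep_system E) (k : nat) :
  is_matroid E I -> nearly_finitary E k I ->
  exists X : E -> Prop, SM_min E I X.
Proof. intros; eapply main_thm; eauto. Qed.
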